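(* There exist $B_n$-invariant homogeneous polynomials $t_1(p),\dots,t_n(p)$ with $\deg t_k=2k$, forming a coordinate system on the orbit space, in which the cometric $\eta$ is constant and moreover $\eta^{ij}(t)=\delta_{i,n+1-j}$ for all $i,j=1,\dots,n$.
   Context: $n\ge2$. $B_n$ acts on $\mathbb{C}^n$ (coordinates $p_1,\dots,p_n$) by permutations and sign changes. $u_k=\sum_{1\le i_1<\dots<i_k\le n}p_{i_1}^2\cdots p_{i_k}^2$ ($k=1,\dots,n$), $u_0=1$, $u_k=0$ for $k<0$. Let $g^{ij}(u)=\frac{1}{4(n-1)}\sum_{k,l}\frac{1-\delta^{kl}}{p_kp_l}\frac{\partial u_i}{\partial p_k}\frac{\partial u_j}{\partial p_l}$ (normalized intersection form) and $\eta^{ij}(u)=\frac{\partial g^{ij}}{\partial u_{n-1}}(u)=\frac{2n-i-j}{n-1}u_{i+j-n-1}$, a flat contravariant metric on the orbit space with constant nonzero determinant. *)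

(* Defs.v *)
From HB Require Import structures.
From mathcomp Require Import all_boot all_order all_algebra all_fingroup.
From mathcomp Require Export mpoly.
Set Implicit Arguments. Unset Strict Implicit. Unset Printing Implicit Defensive.
Import Order.TTheory GRing.Theory Num.Theory.
Local Open Scope ring_scope.

(* Polynomials in the coordinates p_1..p_n are {mpoly C[n]}, variable 'X_i = p_(i+1).
   Polynomials on the orbit space in the coordinates u_1..u_n are also {mpoly C[n]},
   variable 'X_a = u_(a+1). *)

Definition uB (C : comNzRingType) (n : nat) (k : 'I_n) : {mpoly C[n]} :=
  comp_mpoly [tuple ('X_i ^+ 2 : {mpoly C[n]}) | i < n] (mesym n C k.+1).

Definition uTuple (C : comNzRingType) (n : nat) : n.-tuple {mpoly C[n]} :=
  [tuple uB C k | k < n].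

(* action of the element (s, e) of B_n (permutation s, signs (-1)^(e i)) on polynomials in p:
   p_(i) |-> (-1)^(e i) p_(s i) *)
Definition Bn_act (C : comNzRingType) (n : nat) (s : 'S_n) (e : 'I_n -> bool)
  (t : {mpoly C[n]}) : {mpoly C[n]} :=
  comp_mpoly [tuple ((-1) ^+ e i *: 'X_(s i) : {mpoly C[n]}) | i < n] t.

(* u_m as an element of the orbit-space polynomial ring, for an integer m given as
   m = k - (n+1) with k : nat : u_0 = 1, u_m = 0 for m < 0, u_m = 'X_(m-1) for 1 <= m <= n *)
Definition uShift (C : comNzRingType) (n k : nat) : {mpoly C[n]} :=
  if (k <= n)%N then 0
  else if k == n.+1 then 1
  else \sum_(a < n | (a + n.+2 == k)%N) 'X_a.

Definition etaU (C : fieldType) (n : nat) (a b : 'I_n) : {mpoly C[n]} :=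
  ((2 * n - (a.+1 + b.+1))%:R / (n - 1)%:R) *: uShift C n (a.+1 + b.+1).

Definition etaT (C : fieldType) (n : nat) (T : 'I_n -> {mpoly C[n]}) (i j : 'I_n)
  : {mpoly C[n]} :=
  \sum_(a < n) \sum_(b < n) mderiv a (T i) * mderiv b (T j) * etaU C a b.

(* Main.v *)
Require Import Defs.
From HB Require Import structures.
From mathcomp Require Import all_boot all_order all_algebra all_fingroup.
From mathcomp Require Import mpoly.
From mathcomp Require Import ring.
From mathcomp Require Import zify.
Import GRing.Theory Num.Theory.
Set Implicit Arguments. Unset Strict Implicit.
Local Open Scope ring_scope.
Lemma alg1 (S : comNzRingType) (b0 b1 a Y Y' L : S) (N : nat) :
  b1 * N.+1%:R = b0 * (a - N%:R) -> L = (N%:R - a) * b0 * (Y' * Y ^+ N) ->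
  L + (1 + Y) * (b1 * (Y' * Y ^+ N *+ N.+1)) - a * Y' * (b1 * Y ^+ N.+1)
  = (N.+1%:R - a) * b1 * (Y' * Y ^+ N.+1).
Proof.
move=> h ->. have h' : b1 * (N%:R + 1) = b0 * (a - N%:R) by rewrite natr1.
rewrite exprS -mulr_natr -natr1.
transitivity ((N%:R - a) * b0 * (Y' * Y ^+ N) + (b1 * (N%:R + 1)) * (Y' * Y ^+ N) + b1 * (N%:R + 1 - a) * Y' * Y * Y^+N); first by ring.
by rewrite h'; ring.
Qed.

Lemma alg2 (S : comNzRingType) (E Ba Bb dBa dBb Y' a b : S) :
  E * (dBa * Bb + Ba * dBb) - (a + b) * Y' * (Ba * Bb) =
  (E * dBa - a * Y' * Ba) * Bb + Ba * (E * dBb - b * Y' * Bb).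
Proof. ring. Qed.

Lemma alg3 (S : comNzRingType) (x A E dA dE c : S) :
  x * (dA * E + A * dE) - (c + 1) * (x * A * dE) = x * (E * dA - c * dE * A).
Proof. ring. Qed.

Lemma alg4 (S : comNzRingType) (x A E dE k : S) :
  A * (E - k * (x * dE)) = A * E - k * (x * A * dE).
Proof. ring. Qed.

Section Low.
Context (S : comNzRingType).
Definition low (N : nat) (p : {poly S}) := forall k, (k < N)%N -> p`_k = 0.

Lemma lowXn N r : low N ('X^N * r).
Proof. by move=> k kN; rewrite coefXnM kN. Qed.

Lemma lowMr N p q : low N p -> low N (p * q).
Proof.
move=> hp k kN; rewrite coefM big1 // => j _.
by rewrite hp ?mul0r // (leq_ltn_trans _ kN) // -ltnS.
Qed.

Lemma lowMl N p q : low N p -> low N (q * p).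
Proof. by rewrite mulrC; apply: lowMr. Qed.

Lemma lowD N p q : low N p -> low N q -> low N (p + q).
Proof. by move=> hp hq k kN; rewrite coefD hp // hq // addr0. Qed.

Lemma lowN N p : low N p -> low N (- p).
Proof. by move=> hp k kN; rewrite coefN hp // oppr0. Qed.

Lemma lowW N M p : (M <= N)%N -> low N p -> low M p.
Proof. by move=> MN hp k kM; apply: hp; apply: leq_trans MN. Qed.

Lemma low_eq N p q : p = q -> low N p -> low N q.
Proof. by move=> ->. Qed.
End Low.

Section Gen.
Context (C : numClosedFieldType) (S : comNzRingType) (f : {rmorphism C -> S}) (Y0 : {poly S}).
Local Notation P := {poly S}.

Definition cst (c : C) : P := (f c)%:P.
Lemma cstD a b : cst (a + b) = cst a + cst b.
Proof. by rewrite /cst rmorphD polyCD. Qed.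
Lemma cstM a b : cst (a * b) = cst a * cst b.
Proof. by rewrite /cst rmorphM polyCM. Qed.
Lemma cstN a : cst (- a) = - cst a.
Proof. by rewrite /cst rmorphN polyCN. Qed.
Lemma cstB a b : cst (a - b) = cst a - cst b.
Proof. by rewrite cstD cstN. Qed.
Lemma cst1 : cst 1 = 1.
Proof. by rewrite /cst rmorph1. Qed.
Lemma cst_nat k : cst k%:R = k%:R.
Proof. by rewrite /cst rmorph_nat polyC_natr. Qed.
Lemma coef_cstM c p k : (cst c * p)`_k = f c * p`_k.
Proof. by rewrite /cst coefCM. Qed.

Definition Y : P := 'X * Y0.
Definition E : P := 1 + Y.

Definition bc (al : C) (j : nat) : C := (\prod_(l < j) (al - l%:R)) / (j`!)%:R.

Lemma bc0 al : bc al 0 = 1.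
Proof. by rewrite /bc big_ord0 fact0 divr1. Qed.

Lemma bcS al j : bc al j.+1 * j.+1%:R = bc al j * (al - j%:R).
Proof.
rewrite /bc big_ord_recr /= factS natrM.
have h1 : (j.+1%:R : C) != 0 by rewrite pnatr_eq0.
have h2 : ((j`!)%:R : C) != 0 by rewrite pnatr_eq0 -lt0n fact_gt0.
by field; rewrite h2 addrC natr1 h1.
Qed.

Definition Bin (al : C) (N : nat) : P := \sum_(j < N) cst (bc al j) * Y ^+ j.
Definition Phi (al : C) (N : nat) : P := \sum_(j < N) cst (bc al j / j.+1%:R) * Y ^+ j.+1.

Lemma BinS al N : Bin al N.+1 = Bin al N + cst (bc al N) * Y ^+ N.
Proof. by rewrite /Bin big_ord_recr. Qed.

Lemma Bin_ode al N :
  E * (Bin al N.+1)^`() - cst al * Y^`() * Bin al N.+1 =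
  cst ((N%:R - al) * bc al N) * (Y^`() * Y ^+ N).
Proof.
elim: N => [|N IH].
  rewrite /Bin big_ord1 bc0 cst1 mul1r expr0.
  have d1 : (1 : P)^`() = 0 by rewrite -polyC1 derivC.
  by rewrite d1 mulr0 add0r !mulr1 sub0r cstN mulNr.
rewrite BinS derivD mulrDr deriv_mulC deriv_exp mulrDr.
rewrite opprD addrACA IH cstM.
have h : cst (bc al N.+1) * N.+1%:R = cst (bc al N) * (cst al - N%:R).
  by rewrite -!cst_nat -cstB -!cstM bcS.
rewrite -[((f (bc al N.+1)))%:P]/(cst (bc al N.+1)) /= addrA cstB cst_nat /E (alg1 h (erefl _)).
by rewrite (cstM (N.+1%:R - al)) cstB cst_nat.
Qed.

Lemma YXn j : Y ^+ j = 'X^j * Y0 ^+ j.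
Proof. by rewrite /Y exprMn. Qed.

Lemma low_ode al N : low N (E * (Bin al N.+1)^`() - cst al * Y^`() * Bin al N.+1).
Proof. by rewrite Bin_ode YXn; apply: lowMl; rewrite mulrCA; exact: lowXn. Qed.

Lemma dE : E^`() = Y^`().
Proof. by rewrite /E derivD -polyC1 derivC add0r. Qed.

Lemma coef0_Y : Y`_0 = 0.
Proof. by rewrite /Y coefXM eqxx. Qed.

Lemma coef0_Yn j : (Y ^+ j.+1)`_0 = 0.
Proof. by rewrite YXn coefXnM. Qed.

Lemma coef0_Bin al N : (Bin al N.+1)`_0 = 1.
Proof.
rewrite /Bin big_ord_recl coefD bc0 cst1 mul1r expr0 coef1 eqxx.
rewrite coef_sum big1 ?addr0 // => j _.
by rewrite coef_cstM coef0_Yn mulr0.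
Qed.

Lemma coef0_E : E`_0 = 1.
Proof. by rewrite /E coefD coef1 coef0_Y addr0. Qed.

Lemma lowX N (p : P) : low N p -> low N.+1 ('X * p).
Proof. by move=> h [|k] hk; rewrite coefXM //= h. Qed.

Definition Q (c : C) : P := E - cst c * ('X * E^`()).

Lemma key (al be c : C) N m : (m < N)%N ->
  al + be + 1 = m%:R * c ->
  (Bin al N.+1 * Bin be N.+1 * Q c)`_m = (m == 0)%:R.
Proof.
move=> mN hab.
set Ba := Bin al N.+1; set Bb := Bin be N.+1; set A := Ba * Bb.
have lowA : low N (E * A^`() - cst (al + be) * E^`() * A).
  rewrite derivM dE cstD alg2; apply: lowD; first by apply: lowMr; exact: low_ode.
  by apply: lowMl; exact: low_ode.
have lowB : low N.+1 ('X * (A * E)^`() - cst (al + be + 1) * ('X * A * E^`())).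
  by rewrite derivM cstD cst1 alg3; apply: lowX.
have hm := lowB m (ltnW mN).
rewrite coefB coef_cstM in hm.
have hX : ('X * (A * E)^`())`_m = (A * E)`_m *+ m.
  by rewrite coefXM; case: m {mN hab hm} => [|m] //=; rewrite coef_deriv.
rewrite hX in hm; move/eqP: hm; rewrite subr_eq0 => /eqP hm.
rewrite /Q alg4 coefB coef_cstM.
case: m mN hab hm hX => [|m] mN hab hm hX.
  have h0 : ('X * A * E^`())`_0 = 0 by rewrite -mulrA coefXM.
  have hA0 : A`_0 = 1 by rewrite /A coef0M /Ba /Bb !coef0_Bin mulr1.
  have hAE : (A * E)`_0 = 1 by rewrite coef0M hA0 coef0_E mulr1.
  by rewrite h0 hAE mulr0 subr0.
have hm0 : (m.+1%:R : C) != 0 by rewrite pnatr_eq0.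
have -> : (A * E)`_m.+1 = f (m.+1%:R^-1) * ((A * E)`_m.+1 *+ m.+1).
  by rewrite -[(A * E)`_m.+1 *+ m.+1]mulr_natl mulrA -(rmorph_nat f) -rmorphM mulVf // rmorph1 mul1r.
rewrite hm mulrA -rmorphM hab mulrA mulVf // mul1r.
by rewrite subrr.
Qed.
End Gen.


Lemma coef_mul_eq (S : comNzRingType) (p p' q : {poly S}) m :
  (forall k, (k <= m)%N -> p`_k = p'`_k) -> (p * q)`_m = (p' * q)`_m.
Proof.
move=> h; rewrite !coefM; apply: eq_bigr => j _; rewrite h //; exact: (ltn_ord j).
Qed.

Lemma alg5' (S : comNzRingType) (x y u v w : S) : x * u * (y * v * w) = x * y * (u * v * w).
Proof. ring. Qed.

Lemma alg6 (S : comNzRingType) (u a v b w q : S) : u * a * (v * b) * (w * q) = u * v * w * (a * b * q).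
Proof. ring. Qed.

Section G2.
Context (S : comNzRingType) (n : nat).
Local Notation P := {poly S}.
Local Notation R := S.

Lemma rev_takeP (G : P) (i : 'I_n) (x : 'I_n -> R) :
  (forall a, x a = ('X^(a.+1) * G)`_(i.+1)) ->
  \sum_(a < n) (x a)%:P * 'X^(n.-1 - a) =
  'X^(n.-1 - i) * take_poly i.+1 G.
Proof.
move=> hx; rewrite (eq_bigr (fun a : 'I_n => (('X^(a.+1) * G)`_(i.+1))%:P * 'X^(n.-1 - a))); last by move=> a _; rewrite hx.
apply/polyP => c; rewrite coef_sum coefXnM coef_take_poly.
have ltin := ltn_ord i.
case: (ltnP c n) => hc.
  have ha0 : (n.-1 - c < n)%N by lia.
  rewrite (bigD1 (Ordinal ha0)) //= big1 ?addr0; last first.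
    move=> a ha; rewrite coefCM coefXn.
    have -> : (c == n.-1 - a)%N = false.
      have la := ltn_ord a; apply/negbTE; apply: contra ha => /eqP hca; apply/eqP/val_inj => /=; lia.
    by rewrite mulr0.
  rewrite coefCM coefXn.
  have -> : (c == n.-1 - (n.-1 - c))%N by apply/eqP; lia.
  rewrite mulr1 coefXnM.
  case: ifP => h1; case: ifP => h2 //; try lia.
  have -> : (c - (n.-1 - i) < i.+1)%N by lia.
  congr (G`_ _); lia.
rewrite big1; last first.
  move=> a _; rewrite coefCM coefXn.
  have la := ltn_ord a; have -> : (c == n.-1 - a)%N = false by apply/negbTE; lia.
  by rewrite mulr0.
have -> : (c < n.-1 - i)%N = false by lia.
by have -> : (c - (n.-1 - i) < i.+1)%N = false by lia.
Qed.


Lemma assembly (Gi Gj Qp : P) (i j : 'I_n) (x y : 'I_n -> S) (etaf : 'I_n -> 'I_n -> S) :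
  (forall a, x a = ('X^(a.+1) * Gi)`_(i.+1)) ->
  (forall b, y b = ('X^(b.+1) * Gj)`_(j.+1)) ->
  (forall a b, etaf a b = ('X^(n.+1) * Qp)`_(a.+1 + b.+1)) ->
  \sum_(a < n) \sum_(b < n) x a * y b * etaf a b =
  if (i + j + 1 < n)%N then 0 else (Gi * Gj * Qp)`_(i + j + 1 - n).
Proof.
move=> hx hy he.
have li := ltn_ord i; have lj := ltn_ord j.
set W := 'X^(n.+1) * Qp.
transitivity (\sum_(a < n) \sum_(b < n) x a * y b * W`_(a.+1 + b.+1)).
  by apply: eq_bigr => a _; apply: eq_bigr => b _; rewrite he.
have hR : (\sum_(a < n) (x a)%:P * 'X^(n.-1 - a)) * (\sum_(b < n) (y b)%:P * 'X^(n.-1 - b)) * W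
   = \sum_(a < n) \sum_(b < n) (x a * y b)%:P * ('X^(n.-1 - a + (n.-1 - b)) * W).
  rewrite -mulrA mulr_suml; apply: eq_bigr => a _; rewrite mulr_suml mulr_sumr; apply: eq_bigr => b _.
  by rewrite polyCM exprD alg5'.
transitivity (((\sum_(a < n) (x a)%:P * 'X^(n.-1 - a)) * (\sum_(b < n) (y b)%:P * 'X^(n.-1 - b)) * W)`_(2 * n)).
  rewrite hR coef_sum; apply: eq_bigr => a _; rewrite coef_sum; apply: eq_bigr => b _.
  have la := ltn_ord a; have lb := ltn_ord b.
  rewrite coefCM (coefXnM (n.-1 - a + (n.-1 - b))).
  have -> : (2 * n < n.-1 - a + (n.-1 - b))%N = false by lia.
  by have -> : (2 * n - (n.-1 - a + (n.-1 - b)) = a.+1 + b.+1)%N by lia.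
rewrite (rev_takeP hx) (rev_takeP hy) /W alg6 -!exprD coefXnM.
case: ltnP => h; case: ltnP => h2 //; try lia.
have -> : (2 * n - (n.-1 - i + (n.-1 - j) + n.+1) = i + j + 1 - n)%N by lia.
set m := (i + j + 1 - n)%N.
have hmi : (m <= i)%N by rewrite /m; lia.
have hmj : (m <= j)%N by rewrite /m; lia.
rewrite -mulrA (@coef_mul_eq _ (take_poly i.+1 Gi) Gi (take_poly j.+1 Gj * Qp)); last first.
  by move=> k hk; rewrite coef_take_poly; have -> : (k < i.+1)%N by lia.
rewrite mulrCA (@coef_mul_eq _ (take_poly j.+1 Gj) Gj (Gi * Qp)); last first.
  by move=> k hk; rewrite coef_take_poly; have -> : (k < j.+1)%N by lia.
by rewrite mulrCA mulrA.
Qed.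
End G2.


Section M.
Context (C : numClosedFieldType) (n : nat).
Local Notation R := {mpoly C[n]}.
Local Notation P := {poly R}.
Local Notation fC := (@mpolyC n C).
Local Notation cst := (cst fC).

Definition D (a : 'I_n) (p : P) : P := map_poly (@mderiv n C a) p.

Lemma coef_D a p k : (D a p)`_k = mderiv a (p`_k).
Proof. by rewrite coef_map_id0 // mderiv0. Qed.

Lemma D_add a p q : D a (p + q) = D a p + D a q.
Proof. by apply/polyP => k; rewrite coefD !coef_D coefD mderivD. Qed.
Lemma D_opp a p : D a (- p) = - D a p.
Proof. by apply/polyP => k; rewrite coefN !coef_D coefN mderivN. Qed.
Lemma D_sum a (I : Type) (r : seq I) (F : I -> P) :
  D a (\sum_(i <- r) F i) = \sum_(i <- r) D a (F i).
Proof.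
elim: r => [|x r IH]; first by rewrite !big_nil; apply/polyP=> k; rewrite coef_D coef0 mderiv0.
by rewrite !big_cons D_add IH.
Qed.

Lemma D_mul a p q : D a (p * q) = D a p * q + p * D a q.
Proof.
apply/polyP => k; rewrite coef_D coefD !coefM.
rewrite (@big_morph _ _ (mderiv a) 0 +%R 0 +%R) ?mderiv0 //; last by move=> x y; rewrite mderivD.
rewrite -big_split /=; apply: eq_bigr => j _.
by rewrite mderivM !coef_D.
Qed.

Lemma coef_cst (c : C) k : (cst c : P)`_k = if k == 0 then c%:MP else 0.
Proof. by rewrite /cst coefC. Qed.
Lemma D_cst (a : 'I_n) (c : C) : D a (cst c : P) = 0.
Proof. apply/polyP => k; rewrite [LHS]coef_D [in LHS]coef_cst [RHS]coef0. case: (k == 0); [exact: mderivC | exact: mderiv0]. Qed.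

Lemma D_Xn a k : D a ('X^k) = 0.
Proof.
apply/polyP => j; rewrite [LHS]coef_D [RHS]coef0 coefXn.
by case: (j == k); rewrite /= ?mderiv0 // -mpolyC1 mderivC.
Qed.

Lemma D_X a : D a 'X = 0.
Proof. by rewrite -(expr1 ('X : P)) D_Xn. Qed.

Lemma D_exp a p j : D a (p ^+ j.+1) = (p ^+ j * D a p) *+ j.+1.
Proof.
elim: j => [|j IH]; first by rewrite expr0 mul1r expr1.
rewrite [p ^+ j.+2]exprS D_mul IH mulrnAr mulrA -exprS [D a p * _]mulrC.
by rewrite [in RHS]mulrS.
Qed.

Definition X0 : P := \sum_(a < n) ('X_a : R)%:P * 'X^a.
Local Notation Y := (Y X0).
Local Notation Bin := (Bin fC X0).
Local Notation Phi := (Phi fC X0).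

Lemma mderivXU (a b : 'I_n) : mderiv a ('X_b : R) = (b == a)%:R.
Proof.
rewrite mderivX mnm1E; case: eqP => [->|_]; last by rewrite scale0r.
have -> : (U_(a) - U_(a))%MM = 0%MM by apply/mnmP => i; rewrite !mnmE subnn.
by rewrite mpolyX0 scale1r.
Qed.

Lemma D_X0 a : D a X0 = 'X^a.
Proof.
rewrite /X0 D_sum (bigD1 a) //= big1 ?addr0.
  rewrite D_mul D_Xn mulr0 addr0; apply/polyP => k.
  case: (ltnP k a) => hk.
    by rewrite [LHS]coefMXn hk coefXn ltn_eqF.
  rewrite [LHS]coefMXn ltnNge hk /= coef_D coefC coefXn.
  have -> : (k == a) = (k - a == 0)%N by rewrite subn_eq0 eqn_leq hk andbT.
  by case: eqP => _; [rewrite mderivXU eqxx | rewrite mderiv0].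
move=> b hb; rewrite D_mul D_Xn mulr0 addr0.
apply/polyP => k; rewrite [RHS]coef0 [LHS]coefMXn; case: ifP => _ //.
rewrite coef_D coefC; case: eqP => _; [by rewrite mderivXU (negbTE hb) | by rewrite mderiv0].
Qed.

Lemma D_Y a : D a Y = 'X^(a.+1).
Proof. by rewrite /Y D_mul D_X mul0r add0r D_X0 exprS. Qed.

Lemma D_Phi a al N : D a (Phi al N) = 'X^(a.+1) * Bin al N.
Proof.
rewrite /Phi /Bin D_sum mulr_sumr; apply: eq_bigr => j _.
rewrite D_mul D_cst mul0r add0r D_exp D_Y mulrnAr -mulrnAl -mulr_natr -(cst_nat fC) -(cstM fC).
have h1 : (j.+1%:R : C) != 0 by rewrite pnatr_eq0.
by rewrite divfK // [Y ^+ j * _]mulrC mulrCA.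
Qed.
End M.


Section M2.
Context (C : numClosedFieldType) (n : nat).
Local Notation R := {mpoly C[n]}.
Local Notation P := {poly R}.
Local Notation fC := (@mpolyC n C).
Local Notation cst := (cst fC).
Local Notation X0 := (@X0 C n).
Local Notation Y := (Y X0).
Local Notation E := (E X0).
Local Notation Bin := (Bin fC X0).
Local Notation Phi := (Phi fC X0).
Local Notation D := (@D C n).

Definition alpha (i : 'I_n) : C := ((i.+1)%:R - n%:R) / (n - 1)%:R.
Definition Gs (i : 'I_n) : P := Bin (alpha i) n.+1.
Definition Ts (i : 'I_n) : R := (Phi (alpha i) n.+1)`_(i.+1).
Definition Qs : P := Q fC X0 ((n - 1)%:R^-1).
Definition W : P := 'X^(n.+1) * Qs.

Lemma dT a i : mderiv a (Ts i) = ('X^(a.+1) * Gs i)`_(i.+1).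
Proof. by rewrite /Ts -coef_D D_Phi. Qed.

Lemma coefX0 k : X0`_k = \sum_(a < n) 'X_a * (k == a)%:R.
Proof. by rewrite /X0 coef_sum; apply: eq_bigr => a _; rewrite coefCM coefXn. Qed.

Lemma coefQs0 : Qs`_0 = 1.
Proof. by rewrite /Qs /Q coefB coef0_E coef_cstM coefXM eqxx mulr0 subr0. Qed.

Lemma coefQsS m : Qs`_m.+1 = (1 - m.+1%:R / (n - 1)%:R)%:MP * X0`_m.
Proof.
rewrite /Qs /Q coefB coef_cstM coefXM /= coef_deriv /E coefD coef1 /= add0r.
rewrite /Y coefXM /= -[X0`_m *+ m.+1]mulr_natl -[(m.+1%:R : R)]mpolyC_nat mulrA -mpolyCM.
by rewrite -{1}[X0`_m]mul1r -mpolyC1 -mulrBl -mpolyCB [_^-1 * _]mulrC.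
Qed.

Lemma etaU_W (hn : (1 < n)%N) (a b : 'I_n) : etaU C a b = W`_(a.+1 + b.+1).
Proof.
have n1 : (n - 1)%:R != 0 :> C by rewrite pnatr_eq0; lia.
have la := ltn_ord a; have lb := ltn_ord b.
rewrite /etaU /uShift /W coefXnM.
case: (leqP (a.+1 + b.+1) n) => h.
  by rewrite scaler0; have -> : (a.+1 + b.+1 < n.+1)%N by lia.
have -> : (a.+1 + b.+1 < n.+1)%N = false by lia.
case: eqP => h2.
  rewrite h2 subnn coefQs0.
  have -> : (2 * n - n.+1 = n - 1)%N by lia.
  by rewrite divff // scale1r.
set m := (a.+1 + b.+1 - n.+1).-1.
have hm : (a.+1 + b.+1 - n.+1 = m.+1)%N by rewrite /m; lia.
rewrite hm coefQsS coefX0 -mul_mpolyC big_mkcond /=.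
congr (_ * _).
  congr (_%:MP).
  have -> : (2 * n - (a.+1 + b.+1) = (n - 1) - m.+1)%N by rewrite /m; lia.
  rewrite natrB; last by rewrite /m; lia.
  by field.
apply: eq_bigr => c _.
have -> : (c + n.+2 == a.+1 + b.+1)%N = (m == c) by rewrite /m; apply/eqP/eqP; lia.
by case: eqP; rewrite ?mulr1 ?mulr0.
Qed.
End M2.


Lemma fid (F : fieldType) (x y N : F) : N - 1 != 0 ->
  (x + 1 - N) / (N - 1) + (y + 1 - N) / (N - 1) + 1 = (x + y + 1 - N) / (N - 1).
Proof. by move=> h; field. Qed.

Section M3.
Context (C : numClosedFieldType) (n : nat).
Local Notation R := {mpoly C[n]}.
Local Notation P := {poly R}.
Local Notation fC := (@mpolyC n C).
Local Notation X0 := (@X0 C n).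
Local Notation Bin := (Bin fC X0).
Local Notation Gs := (@Gs C n).
Local Notation Ts := (@Ts C n).
Local Notation W := (@W C n).
Local Notation Qs := (@Qs C n).

Lemma etaT_main (hn : (1 < n)%N) (i j : 'I_n) : etaT Ts i j = ((i + j == n.-1)%N)%:R.
Proof.
have n1 : (n - 1)%:R != 0 :> C by rewrite pnatr_eq0; lia.
have li := ltn_ord i; have lj := ltn_ord j.
rewrite /etaT.
apply: (etrans (@assembly _ n (Gs i) (Gs j) Qs i j (fun a => mderiv a (Ts i)) (fun b => mderiv b (Ts j)) (fun a b => etaU C a b) _ _ _)).
- by move=> a; rewrite dT.
- by move=> b; rewrite dT.
- by move=> a b; rewrite etaU_W.
case: ltnP => h.
  by have -> : (i + j == n.-1)%N = false by lia.
rewrite /Gs /Qs key; last 2 first.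
- lia.
- rewrite /alpha.
  have e1 : ((i + j + 1 - n)%:R : C) = i%:R + j%:R + 1 - n%:R.
    by rewrite natrB ?natrD //; lia.
  have e2 : ((n - 1)%:R : C) = n%:R - 1 by rewrite natrB //; lia.
  rewrite e1 e2 -!natr1; apply: fid; rewrite -e2 //.
by have -> : (i + j + 1 - n == 0)%N = (i + j == n.-1)%N by apply/eqP/eqP; lia.
Qed.
End M3.


Section M4.
Context (C : numClosedFieldType) (n : nat).
Local Notation R := {mpoly C[n]}.
Local Notation P := {poly R}.
Local Notation fC := (@mpolyC n C).
Local Notation cst := (cst fC).
Local Notation X0 := (@X0 C n).
Local Notation Y := (Y X0).
Local Notation Bin := (Bin fC X0).
Local Notation Phi := (Phi fC X0).
Local Notation Gs := (@Gs C n).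
Local Notation Ts := (@Ts C n).

Definition whp (p : P) := forall k, p`_k \is k.-homog for mnmwgt.

Lemma whp_add p q : whp p -> whp q -> whp (p + q).
Proof. by move=> hp hq k; rewrite coefD; apply: rpredD. Qed.

Lemma whp_sum (I : Type) (r : seq I) (F : I -> P) : (forall i, whp (F i)) -> whp (\sum_(i <- r) F i).
Proof. by move=> h k; rewrite coef_sum; apply: rpred_sum => i _; exact: h. Qed.

Lemma whp_mul p q : whp p -> whp q -> whp (p * q).
Proof.
move=> hp hq k; rewrite coefM; apply: rpred_sum => j _.
have hj : (j <= k)%N by rewrite -ltnS.
by have := dhomogM (hp j) (hq (k - j)%N); rewrite subnKC.
Qed.

Lemma homogC0 (c : C) : (c%:MP : R) \is 0.-homog for mnmwgt.
Proof. by rewrite -[c%:MP]mulr1 mul_mpolyC; apply: dhomogZ; exact: dhomog1. Qed.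

Lemma whp_cst c : whp (cst c).
Proof. by move=> [|k]; rewrite coef_cst /=; [exact: homogC0 | exact: rpred0]. Qed.

Lemma whp1 : whp 1.
Proof. by rewrite -(cst1 fC); exact: whp_cst. Qed.

Lemma whp_exp p j : whp p -> whp (p ^+ j).
Proof. by move=> hp; elim: j => [|j IH]; [exact: whp1 | rewrite exprS; apply: whp_mul]. Qed.

Lemma whp_Y : whp Y.
Proof.
move=> [|k]; first by rewrite coef0_Y; exact: rpred0.
rewrite /Y coefXM /= coefX0; apply: rpred_sum => a _.
case: eqP => [->|_]; last by rewrite mulr0; exact: rpred0.
by rewrite mulr1 dhomogX; apply/eqP; exact: mnmwgt1.
Qed.

Lemma whp_Phi al N : whp (Phi al N).
Proof.
apply: whp_sum => j; apply: whp_mul; first exact: whp_cst.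
exact/whp_exp/whp_Y.
Qed.

Lemma Ts_homog (k : 'I_n) : Ts k \is (k.+1).-homog for mnmwgt.
Proof. exact: whp_Phi. Qed.

Lemma dTs_diag (k : 'I_n) : mderiv k (Ts k) = 1.
Proof. by rewrite dT coefXnM ltnn subnn /Gs coef0_Bin. Qed.

Lemma Ts_coefU (k : 'I_n) : (Ts k)@_U_(k) = 1.
Proof.
have := congr1 (mcoeff 0%MM) (dTs_diag k).
by rewrite mcoeff_deriv add0m mnm0E mulr1n mcoeff1 eqxx.
Qed.

Definition lowvars (k : nat) (p : R) :=
  forall m, m \in msupp p -> forall j : 'I_n, (k <= j)%N -> m j = 0%N.

Lemma wgt_lowvars (k : 'I_n) (m : 'X_{1..n}) : mnmwgt m = k.+1 -> m != U_(k)%MM ->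
  forall j : 'I_n, (k <= j)%N -> m j = 0%N.
Proof.
move=> hw hm j hj; apply/eqP; apply: contraR hm => mj0.
have e := hw; rewrite /mnmwgt (bigD1 j) //= in e.
have h1 : (j.+1 <= m j * j.+1)%N by rewrite leq_pmull // lt0n.
have hjk : j = k :> nat by lia.
have hmj : m j = 1%N by nia.
rewrite hmj mul1n hjk in e.
have hrest : (\sum_(i < n | i != j) m i * i.+1 = 0)%N by apply/eqP; rewrite -(eqn_add2l k.+1) addn0 e.
have jk : j = k by apply: val_inj.
apply/eqP/mnmP => i; rewrite mnm1E.
case: (eqVneq i j) => [->|hij]; first by rewrite hmj jk eqxx.
move/eqP: hrest; rewrite sum_nat_eq0 => /forallP /(_ i); rewrite hij /= muln_eq0 orbF => /eqP ->.
by rewrite -jk eq_sym (negbTE hij).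
Qed.

Lemma L_lowvars (k : 'I_n) : lowvars k (Ts k - 'X_k).
Proof.
move=> m; rewrite mcoeff_msupp mcoeffB mcoeffX => hm.
have hU : m != U_(k)%MM.
  by apply: contra hm => /eqP ->; rewrite Ts_coefU eqxx subrr.
move: hm; rewrite (eq_sym U_(k)%MM) (negbTE hU) subr0 -mcoeff_msupp => hm.
apply: wgt_lowvars hU.
exact: (dhomog_mf (Ts_homog k) hm).
Qed.
End M4.


Section M5.
Context (C : numClosedFieldType) (n : nat).
Local Notation R := {mpoly C[n]}.
Local Notation Ts := (@Ts C n).

Lemma comp_comp (k l : nat) (p : R) (lq : n.-tuple {mpoly C[k]}) (lr : k.-tuple {mpoly C[l]}) :
  (p \mPo lq) \mPo lr = p \mPo [tuple (tnth lq i \mPo lr) | i < n].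
Proof.
rewrite [p \mPo lq]comp_mpolyE [in RHS]comp_mpolyE raddf_sum /=.
apply: eq_bigr => m _; rewrite linearZ /= rmorph_prod; congr (_ *: _).
by apply: eq_bigr => i _; rewrite rmorphXn tnth_mktuple.
Qed.

Lemma comp_lowvars k (p : R) (lq lq' : n.-tuple R) : lowvars k p ->
  (forall j : 'I_n, (j < k)%N -> tnth lq j = tnth lq' j) -> p \mPo lq = p \mPo lq'.
Proof.
move=> hp hq; rewrite !comp_mpolyE; apply: eq_big_seq => m hm; congr (_ *: _).
apply: eq_bigr => i _; case: (ltnP i k) => hik; first by rewrite hq.
by rewrite (hp m hm i hik) !expr0.
Qed.

Fixpoint Uacc (k : nat) : 'I_n -> R :=
  if k is k'.+1 then
    (fun i => if (i == k' :> nat) then 'X_i - ((Ts i - 'X_i) \mPo [tuple Uacc k' j | j < n]) else Uacc k' i)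
  else (fun i => 'X_i).

Lemma Uacc_spec k (i : 'I_n) : (i < k)%N -> Uacc k i \mPo [tuple Ts j | j < n] = 'X_i.
Proof.
elim: k i => [|k IH] i hi //=.
case: eqP => hik; last by apply: IH; lia.
rewrite comp_mpolyB comp_mpolyXU -tnth_nth tnth_mktuple comp_comp.
rewrite (@comp_lowvars i _ _ [tuple 'X_j | j < n] (@L_lowvars C n i)); last first.
  by move=> j hj; rewrite !tnth_mktuple IH //; lia.
by rewrite comp_mpoly_id opprB addrC subrK.
Qed.

Definition Us (k : 'I_n) : R := Uacc n k.

Lemma U_spec (k : 'I_n) :
  uB C k = comp_mpoly [tuple comp_mpoly (uTuple C n) (Ts i) | i < n] (Us k).
Proof.
have e : [tuple comp_mpoly (uTuple C n) (Ts i) | i < n] =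
         [tuple (tnth [tuple Ts j | j < n] i \mPo uTuple C n) | i < n].
  by apply: eq_from_tnth => i; rewrite !tnth_mktuple.
rewrite e -comp_comp /Us Uacc_spec // comp_mpolyXU -tnth_nth tnth_mktuple.
by [].
Qed.
End M5.


Section M6.
Context (C : numClosedFieldType) (n : nat).
Local Notation R := {mpoly C[n]}.
Local Notation Ts := (@Ts C n).
Local Notation sq := [tuple ('X_i ^+ 2 : R) | i < n].

Lemma uB_inv (s : 'S_n) (e : 'I_n -> bool) (i : 'I_n) : Bn_act s e (uB C i) = uB C i.
Proof.
rewrite /Bn_act /uB comp_comp.
have -> : [tuple (tnth sq j \mPo [tuple ((-1) ^+ e i *: 'X_(s i) : R) | i < n]) | j < n] = [tuple tnth sq (s j) | j < n].
  apply: eq_from_tnth => j; rewrite !tnth_mktuple rmorphXn /= comp_mpolyXU -tnth_nth tnth_mktuple.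
  by rewrite exprZn sqrr_sign scale1r.
rewrite -msym_mPo.
by have /issymP -> := mesym_sym n C i.+1.
Qed.

Lemma t_inv (k : 'I_n) (s : 'S_n) (e : 'I_n -> bool) :
  Bn_act s e (comp_mpoly (uTuple C n) (Ts k)) = comp_mpoly (uTuple C n) (Ts k).
Proof.
rewrite /Bn_act comp_comp; congr (_ \mPo _).
apply: eq_from_tnth => j; rewrite !tnth_mktuple.
exact: uB_inv.
Qed.

Lemma dhomog_Xsq (m : 'X_{1..n}) : 'X_[m] \mPo sq \is (2 * mdeg m).-homog.
Proof.
rewrite comp_mpolyX mdegE big_distrr /=.
apply: (big_ind2 (fun (p : R) (d : nat) => p \is d.-homog)).
- exact: dhomog1.
- by move=> p1 d1 p2 d2 h1 h2; apply: dhomogM.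
move=> i _; rewrite tnth_mktuple.
have h1 : ('X_i : R) \is 1.-homog by rewrite dhomogX; apply/eqP; exact: mdeg1.
by have := dhomogMn (m i) (dhomogMn 2 h1); rewrite mul1n.
Qed.

Lemma homog_sq d (p : R) : p \is d.-homog -> p \mPo sq \is (2 * d).-homog.
Proof.
move=> hp; rewrite comp_mpolyEX big_seq; apply: rpred_sum => m hm.
apply: dhomogZ; rewrite -(dhomog_mf hp hm); exact: dhomog_Xsq.
Qed.

Lemma t_homog (k : 'I_n) : comp_mpoly (uTuple C n) (Ts k) \is (2 * k.+1).-homog.
Proof.
have e : uTuple C n = [tuple (tnth [tuple mesym n C i.+1 | i < n] i \mPo sq) | i < n].
  by apply: eq_from_tnth => i; rewrite !tnth_mktuple.
rewrite e -comp_comp; apply: homog_sq.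
by rewrite -mwmwgt_homogE; exact: Ts_homog.
Qed.

Theorem mainTheorem13' (hn : (2 <= n)%N) :
  exists t : 'I_n -> {mpoly C[n]},
    (forall (k : 'I_n) (s : 'S_n) (e : 'I_n -> bool), Bn_act s e (t k) = t k) /\
    (forall k : 'I_n, t k \is (2 * k.+1)%N.-homog) /\
    exists (T U : 'I_n -> {mpoly C[n]}),
      (forall k : 'I_n, t k = comp_mpoly (uTuple C n) (T k)) /\
      (forall k : 'I_n, uB C k = comp_mpoly [tuple t i | i < n] (U k)) /\
      (forall i j : 'I_n, etaT T i j = ((i + j == n.-1)%N)%:R).
Proof.
exists (fun k => comp_mpoly (uTuple C n) (Ts k)); split; first by move=> k s e; exact: t_inv.
split; first exact: t_homog.
exists Ts, (@Us C n); split; first by [].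
split; first by move=> k; exact: U_spec.
by move=> i j; exact: etaT_main.
Qed.
End M6.

Unset Implicit Arguments.

Theorem mainTheorem13 (C : numClosedFieldType) (n : nat) (hn : (2 <= n)%N) :
  exists t : 'I_n -> {mpoly C[n]},
    (* B_n-invariant *)
    (forall (k : 'I_n) (s : 'S_n) (e : 'I_n -> bool), Bn_act s e (t k) = t k) /\
    (* homogeneous, deg t_(k+1) = 2(k+1) *)
    (forall k : 'I_n, t k \is (2 * k.+1)%N.-homog) /\
    (* coordinate system on the orbit space: t = T(u) and u = U(t), polynomially *)
    exists (T U : 'I_n -> {mpoly C[n]}),
      (forall k : 'I_n, t k = comp_mpoly (uTuple C n) (T k)) /\
      (forall k : 'I_n, uB C k = comp_mpoly [tuple t i | i < n] (U k)) /\
      (* eta^{ij}(t) = delta_{i, n+1-j} (0-based: i + j = n - 1) *)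
      (forall i j : 'I_n, etaT T i j = ((i + j == n.-1)%N)%:R).
Proof. exact: (@mainTheorem13' C n hn). Qed.
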